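(* Let $n\ge1$, $K=U(n)$, $\underline{\lambda}=(\lambda_1\ge\dots\ge\lambda_{n+1})$, $\underline{\mu}=(\mu_1\ge\dots\ge\mu_n)$ with $\lambda_1\ge\mu_1\ge\lambda_2\ge\dots\ge\mu_n\ge\lambda_{n+1}$, $m=m(\underline{\mu})$, and let $\tilde p\in\mathcal{O}_\Lambda$, $V=\bigoplus V_i$-projections $V_i,U_i$ and $L_i$ be as in the context. Then for every $i=1,\dots,m$ there is an isomorphism of $L_i$-representations $$V_i/U_i\cong\begin{cases}\mathbb{C}^{n_i(\underline{\mu})} & \text{if the component labelled }\underline{\mu}_i\text{ is a parallelogram-shape},\\ \{0\}&\text{otherwise},\end{cases}$$ where $\mathbb{C}^{n_i(\underline{\mu})}$ is the standard representation of $U(n_i(\underline{\mu}))=L_i$.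
   Context: Notation: for a finite real sequence $\underline{\tau}$, $[\underline{\tau}]$ is its set of distinct values, $\underline{\tau}_i$ the $i$-th element of $[\underline{\tau}]$ in decreasing order, $m(\underline{\tau})=|[\underline{\tau}]|$, $n_v(\underline{\tau})$ the multiplicity of $v$, $n_i(\underline{\tau})=n_{\underline{\tau}_i}(\underline{\tau})$. Shapes: for each value $v$ in $\underline{\lambda}$ or $\underline{\mu}$, the component labelled $v$ is an M-shape if $n_v(\underline{\mu})=n_v(\underline{\lambda})+1$, a W-shape if $n_v(\underline{\lambda})=n_v(\underline{\mu})+1$, a parallelogram-shape if $n_v(\underline{\lambda})=n_v(\underline{\mu})$. For $\mu\in[\underline{\mu}]$ with M-shape component, $r_\mu>0$ with $r_\mu^2=-\prod_{\lambda\in[\underline{\lambda}],\,\text{W}}(\mu-\lambda)\prod_{\tau\in[\underline{\mu}],\,\text{M},\,\tau\neq\mu}\frac{1}{\mu-\tau}$; otherwise $r_\mu=0$. Setting: $\mathcal{O}_\Lambda$ is the set of $(n+1)\times(n+1)$ Hermitian matrices with eigenvalues $\lambda_1,\dots,\lambda_{n+1}$, with symplectic form $(\omega_\Lambda)_p([X,p],[Y,p])=\frac{1}{\sqrt{-1}}\mathrm{Tr}(p[X,Y])$, $X,Y\in\mathfrak{u}(n+1)$; $K$ acts by conjugation by $\mathrm{diag}(1,k)$. $\mathrm{M}=\mathrm{diag}(\mu_1,\dots,\mu_n)$, $c=\sum\lambda_i-\sum\mu_i$. Split $\mathbb{C}^n=\bigoplus_{i=1}^m\mathbb{C}^{n_i(\underline{\mu})}$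 according to the blocks of equal consecutive $\mu_j$; $\mathbf{v}_i$ denotes the $i$-th block of $\mathbf{v}\in\mathbb{C}^n$. $\tilde p=\begin{pmatrix}c&\mathbf{z}^\dagger\\ \mathbf{z}&\mathrm{M}\end{pmatrix}$ where $\mathbf{z}_i=(r_{\underline{\mu}_i},0,\dots,0)^T$ for each $i$; then $\tilde p\in\mathcal{O}_\Lambda$. Let $T\colon T_{\tilde p}(K\cdot\tilde p)^\omega\to\mathbb{C}^n$ send a tangent vector (which is a Hermitian matrix of the form $\begin{pmatrix}0&\mathbf{v}^\dagger\\ \mathbf{v}&0\end{pmatrix}$) to its lower-left block $\mathbf{v}$; here $T_{\tilde p}(K\cdot\tilde p)^\omega$ is the $\omega_\Lambda$-orthogonal complement of the tangent space of the $K$-orbit. Let $V=T(T_{\tilde p}(K\cdot\tilde p)^\omega)$, $U=T(T_{\tilde p}(K\cdot\tilde p)\cap T_{\tilde p}(K\cdot\tilde p)^\omega)$, and let $V_i,U_i\subset\mathbb{C}^{n_i(\underline{\mu})}$ be the projections of $V,U$ onto the $i$-th block, so $U_i\subseteq V_i$. The isotropy group $K_{\tilde p}$ is the block-diagonal group $L_1\times\dots\times L_m$ with $L_i=\{\mathrm{diag}(1,k):k\in U(n_i(\underline{\mu})-1)\}\le U(n_i(\underline{\mu}))$ if the component labelled $\underline{\mu}_i$ is an M-shape and $L_i=U(n_i(\underline{\mu}))$ otherwise; $L_i$ acts on $\mathbb{C}^{n_i(\underline{\mu})}$ via $L_i\subseteq U(n_i(\underline{\mu}))$, preserving $U_i\subseteq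 V_i$, hence acts on $V_i/U_i$. *)

(* Defs.v *)
From HB Require Import structures.
From mathcomp Require Import all_boot all_order all_algebra.
From mathcomp Require Import complex.
Set Implicit Arguments. Unset Strict Implicit. Unset Printing Implicit Defensive.
Import Order.TTheory GRing.Theory Num.Theory.
Local Open Scope ring_scope.

Section Defs.
Variable R : rcfType.
Local Notation C := (R[i]).

Definition toC (x : R) : C := Complex x 0.
Definition imag_unit : C := Complex 0 1.

Definition dvals (k : nat) (f : 'I_k -> R) : seq R :=
  sort (fun x y => y <= x) (undup [seq f j | j <- enum 'I_k]).

Definition mval (k : nat) (f : 'I_k -> R) (v : R) : nat :=
  #|[pred j : 'I_k | f j == v]|.

(* m(mu), mu_i (0-based), n_i(mu) *)
Definition mblocks (n : nat) (mu : 'I_n -> R) : nat := size (dvals mu).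
Definition blockval (n : nat) (mu : 'I_n -> R) (i : nat) : R := nth 0 (dvals mu) i.
Definition blocksize (n : nat) (mu : 'I_n -> R) (i : nat) : nat :=
  mval mu (blockval mu i).
(* position (0-based) of the first index of block i in 1..n, mu being
   non-increasing *)
Definition blockstart (n : nat) (mu : 'I_n -> R) (i : nat) : nat :=
  #|[pred j : 'I_n | blockval mu i < mu j]|.

Section Shapes.
Variables (n : nat) (lam : 'I_n.+1 -> R) (mu : 'I_n -> R).

Definition isMshape (v : R) : bool := mval mu v == (mval lam v).+1.
Definition isWshape (v : R) : bool := mval lam v == (mval mu v).+1.
Definition isPshape (v : R) : bool := mval lam v == mval mu v.

Definition rsq (v : R) : R :=
  - (\prod_(l <- dvals lam | isWshape l) (v - l)) *
    \prod_(t <- dvals mu | isMshape t && (t != v)) (v - t)^-1.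

Definition rval (v : R) : R := if isMshape v then Num.sqrt (rsq v) else 0.

Definition cconst : R := \sum_(j < n.+1) lam j - \sum_(j < n) mu j.

(* z : the i-th block of z is (r_{mu_i}, 0, ..., 0) *)
Definition zvec (j : 'I_n) : C :=
  if [forall k : 'I_n, (k < j)%N ==> (mu k != mu j)]
  then toC (rval (mu j)) else 0.

(* p~ = [[c, z^dagger], [z, M]] *)
Definition ptilde : 'M[C]_n.+1 := \matrix_(a, b)
  match unlift ord0 a, unlift ord0 b with
  | None, None => toC cconst
  | None, Some k => conjc (zvec k)
  | Some j, None => zvec j
  | Some j, Some k => if j == k then toC (mu j) else 0
  end.
End Shapes.

Definition adjmx (d : nat) (A : 'M[C]_d) : 'M[C]_d := (map_mx (@conjc R) A)^T.
Definition skewH (d : nat) (X : 'M[C]_d) : Prop := adjmx X = - X.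
Definition unitaryM (d : nat) (g : 'M[C]_d) : Prop := g *m adjmx g = 1%:M.
Definition lie (d : nat) (X Y : 'M[C]_d) : 'M[C]_d := X *m Y - Y *m X.

(* diag(0, Y) : the infinitesimal action of K = U(n) via diag(1,k) *)
Definition diag0 (n : nat) (Y : 'M[C]_n) : 'M[C]_n.+1 := \matrix_(a, b)
  match unlift ord0 a, unlift ord0 b with
  | Some j, Some k => Y j k
  | _, _ => 0
  end.

Definition omegaKKS (d : nat) (p X Y : 'M[C]_d) : C :=
  imag_unit^-1 * \tr (p *m lie X Y).

Section Tangent.
Variables (n : nat) (p : 'M[C]_n.+1).

Definition TK (xi : 'M[C]_n.+1) : Prop :=
  exists Y : 'M[C]_n, skewH Y /\ xi = lie (diag0 Y) p.

(* T_p(K.p)^omega, inside T_p O = { [X,p] : X in u(n+1) } *)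
Definition TKomega (xi : 'M[C]_n.+1) : Prop :=
  exists X : 'M[C]_n.+1, [/\ skewH X, xi = lie X p &
    forall Y : 'M[C]_n, skewH Y -> omegaKKS p X (diag0 Y) = 0].

Definition Tmap (xi : 'M[C]_n.+1) : 'cV[C]_n := \col_j xi (lift ord0 j) ord0.

Definition Vsp (v : 'cV[C]_n) : Prop := exists2 xi, TKomega xi & Tmap xi = v.
Definition Usp (v : 'cV[C]_n) : Prop :=
  exists xi, [/\ TK xi, TKomega xi & Tmap xi = v].
End Tangent.

Section Blocks.
Variables (n : nat) (lam : 'I_n.+1 -> R) (mu : 'I_n -> R) (i : nat).

Definition projblock (v : 'cV[C]_n) : 'cV[C]_(blocksize mu i) :=
  \col_k nth 0 [seq v j ord0 | j <- enum 'I_n] (blockstart mu i + k).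

Definition Vblock (w : 'cV[C]_(blocksize mu i)) : Prop :=
  exists2 v, Vsp (ptilde lam mu) v & projblock v = w.
Definition Ublock (w : 'cV[C]_(blocksize mu i)) : Prop :=
  exists2 v, Usp (ptilde lam mu) v & projblock v = w.

(* L_i : diag(1, U(n_i - 1)) for an M-shape, U(n_i) otherwise *)
Definition Lgrp (g : 'M[C]_(blocksize mu i)) : Prop :=
  unitaryM g /\
  (isMshape lam mu (blockval mu i) ->
     forall a b : 'I_(blocksize mu i),
       (val a == 0)%N || (val b == 0)%N ->
       g a b = (if val a == val b then 1 else 0)).
End Blocks.

(* V/U is isomorphic, as a (real) L-representation, to the standard
   representation C^d of L <= U(d): there is a real-linear L-equivariant map
   from V onto C^d whose kernel is exactly U. *)
Definition quot_iso_std (d : nat) (V U : 'cV[C]_d -> Prop) (L : 'M[C]_d -> Prop)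
  : Prop :=
  exists f : 'cV[C]_d -> 'cV[C]_d,
    [/\ (forall (a : R) v w, V v -> V w -> f (toC a *: v + w) = toC a *: f v + f w),
        (forall y, exists2 v, V v & f v = y),
        (forall v, V v -> (f v = 0 <-> U v)) &
        (forall g v, L g -> V v -> f (g *m v) = g *m f v)].

Definition quot_trivial (d : nat) (V U : 'cV[C]_d -> Prop) : Prop :=
  forall v, V v -> U v.

End Defs.
Arguments Vblock {R n} lam mu i w.
Arguments Ublock {R n} lam mu i w.
Arguments Lgrp {R n} lam mu i g.

(* Main.v *)
Require Import Defs.
From HB Require Import structures.
From mathcomp Require Import all_boot all_order all_algebra.
From mathcomp Require Import complex.
From mathcomp Require Import zify ring lra.
Import Order.TTheory GRing.Theory Num.Theory.
Local Open Scope ring_scope.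
Set Implicit Arguments. Unset Strict Implicit. Unset Printing Implicit Defensive.
Lemma count_lt_iota (k m : nat) : count (fun i => (i < k)%N) (iota 0 m) = minn k m.
Proof.
elim: m => [|m IH]; first by rewrite minn0.
rewrite -addn1 iotaD count_cat IH /= add0n addn0.
case: (ltnP m k) => h /=; lia.
Qed.

Lemma card_ord_lt (m k : nat) : #|[pred i : 'I_m | (i < k)%N]| = minn k m.
Proof.
rewrite cardE /enum_mem -enumT /=.
rewrite size_filter -(count_map val (fun i => (i < k)%N)).
by rewrite val_enum_ord count_lt_iota.
Qed.

Lemma prefixP (m : nat) (A : pred 'I_m) :
  (forall i j : 'I_m, (i <= j)%N -> A j -> A i) ->
  forall j : 'I_m, A j = (j < #|A|)%N.
Proof.
move=> dc j; apply/idP/idP.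
  move=> Aj.
  have: (#|[pred i : 'I_m | (i < j.+1)%N]| <= #|A|)%N.
    apply/subset_leq_card/subsetP => i; rewrite inE /= => hi.
    by apply: (dc i j) => //.
  by rewrite card_ord_lt (minn_idPl (ltn_ord j)).
move=> lt; apply/negPn/negP => nAj.
have: (#|A| <= #|[pred i : 'I_m | (i < j)%N]|)%N.
  apply/subset_leq_card/subsetP => i; rewrite inE /= => Ai.
  rewrite ltnNge; apply/negP => ji; by move: nAj; rewrite (dc j i ji Ai).
rewrite card_ord_lt => h.
have := leq_trans lt h; have := ltn_ord j; lia.
Qed.

Lemma sum_part (T : eqType) (K : nzRingType) (k : nat) (f : 'I_k -> T)
  (S : seq T) (G : T -> K) :
  uniq S -> (forall j, f j \in S) ->
  \sum_j G (f j) = \sum_(u <- S) G u * (#|[pred j | f j == u]|)%:R.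
Proof.
move=> uS fS.
transitivity (\sum_j \sum_(u <- S | u == f j) G u).
  apply: eq_bigr => j _.
  by rewrite -big_filter filter_pred1_uniq // big_seq1.
rewrite (exchange_big_dep predT) //= big_mkcond /=; apply: eq_bigr => u _.
rewrite mulr_natr -sumr_const; apply: eq_bigl => j; by rewrite inE eq_sym.
Qed.

Lemma mono_step (R : realDomainType) (m : nat) (f : 'I_m -> R) :
  (forall a b : 'I_m, val b = (val a).+1 -> f b <= f a) ->
  forall i j : 'I_m, (i <= j)%N -> f j <= f i.
Proof.
move=> st i j hij.
have [d hd] : exists d, nat_of_ord j = (i + d)%N by exists (j - i)%N; lia.
elim: d j hij hd => [|d IH] j hij hd.
  by have -> : j = i by apply: val_inj; rewrite /= hd addn0.
have hj1 : (i + d < m)%N by have := ltn_ord j; lia.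
apply: le_trans (IH (Ordinal hj1) _ _) => //=; last by lia.
by apply: st => /=; rewrite hd addnS.
Qed.

Section Cx.
Variable R : rcfType.
Local Notation C := (R[i]).
Local Open Scope complex_scope.

Lemma toCE (x : R) : toC x = x%:C. Proof. by []. Qed.
Lemma toCD (x y : R) : toC (x + y) = toC x + toC y. Proof. by rewrite !toCE rmorphD. Qed.
Lemma toCB (x y : R) : toC (x - y) = toC x - toC y. Proof. by rewrite !toCE rmorphB. Qed.
Lemma toCN (x : R) : toC (- x) = - toC x. Proof. by rewrite !toCE rmorphN. Qed.
Lemma toCM (x y : R) : toC (x * y) = toC x * toC y. Proof. by rewrite !toCE rmorphM. Qed.
Lemma toCV (x : R) : toC (x^-1) = (toC x)^-1. Proof. by rewrite !toCE fmorphV. Qed.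
Lemma toC0 : toC 0 = 0 :> C. Proof. by []. Qed.
Lemma toC1 : toC 1 = 1 :> C. Proof. by []. Qed.
Lemma toC_inj (x y : R) : toC x = toC y -> x = y. Proof. by case. Qed.
Lemma toC_eq0 (x : R) : (toC x == 0) = (x == 0).
Proof. by apply/eqP/eqP => [/toC_inj|->]. Qed.
Lemma conj_toC (x : R) : conjc (toC x) = toC x.
Proof. by rewrite /toC /= oppr0. Qed.

Ltac cxt := apply/eqP; rewrite eq_complex /=; apply/andP; split; apply/eqP; ring.

Lemma cjD (x y : C) : conjc (x + y) = conjc x + conjc y.
Proof. by case: x => a b; case: y => c d; cxt. Qed.
Lemma cjN (x : C) : conjc (- x) = - conjc x.
Proof. by case: x => a b; cxt. Qed.
Lemma cjB (x y : C) : conjc (x - y) = conjc x - conjc y.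
Proof. by rewrite cjD cjN. Qed.
Lemma cjM (x y : C) : conjc (x * y) = conjc x * conjc y.
Proof. by case: x => a b; case: y => c d; cxt. Qed.
Lemma cj0 : conjc (0 : C) = 0.
Proof. by cxt. Qed.
Lemma cjK (x : C) : conjc (conjc x) = x.
Proof. by case: x => a b; cxt. Qed.
Lemma cjV (x : C) : conjc (x^-1) = (conjc x)^-1.
Proof. exact: conjc_inv. Qed.
Lemma conj_sum (I : Type) (r : seq I) (P : pred I) (F : I -> C) :
  conjc (\sum_(i <- r | P i) F i) = \sum_(i <- r | P i) conjc (F i).
Proof. by elim/big_rec2: _ => [|i x y _ <-]; rewrite ?cj0 ?cjD. Qed.

Lemma conj_frac (a b c d : C) (x y : R) :
  conjc (- (a * conjc b + c * conjc d) / (toC x - toC y)) =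
  - (conjc a * b + conjc c * d) / (toC x - toC y).
Proof.
rewrite (cjM (- (a * conjc b + c * conjc d)) ((toC x - toC y)^-1)).
rewrite (cjN (a * conjc b + c * conjc d)) (cjV (toC x - toC y)).
rewrite (cjD (a * conjc b) (c * conjc d)) (cjM a (conjc b)) (cjM c (conjc d)).
by rewrite !cjK (cjB (toC x) (toC y)) !conj_toC.
Qed.

Lemma conj_divr (x : C) (a : R) : conjc (x / toC a) = conjc x / toC a.
Proof. by rewrite (cjM x ((toC a)^-1)) (cjV (toC a)) conj_toC. Qed.

Definition imag (x : C) := conjc x = - x.

Lemma imag_conj x : imag x -> imag (conjc x).
Proof. by rewrite /imag => h; rewrite cjK h opprK. Qed.

Lemma imag0 : imag 0. Proof. by rewrite /imag cj0 oppr0. Qed.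
Lemma imagD x y : imag x -> imag y -> imag (x + y).
Proof. rewrite /imag => hx hy; rewrite cjD hx hy opprD //. Qed.
Lemma imagN x : imag x -> imag (- x).
Proof. rewrite /imag => hx; rewrite cjN hx //. Qed.
Lemma imagB x y : imag x -> imag y -> imag (x - y).
Proof. by move=> hx hy; apply: imagD => //; apply: imagN. Qed.
Lemma imagMl a x : imag x -> imag (toC a * x).
Proof. rewrite /imag => hx; rewrite cjM conj_toC hx mulrN //. Qed.
Lemma imagMr a x : imag x -> imag (x * toC a).
Proof. by move=> h; rewrite mulrC; apply: imagMl. Qed.
Lemma imag_sum (I : Type) (r : seq I) (P : pred I) (F : I -> C) :
  (forall i, P i -> imag (F i)) -> imag (\sum_(i <- r | P i) F i).
Proof.
move=> h; elim/big_rec: _ => [|i x Pi hx]; first exact: imag0.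
by apply: imagD => //; apply: h.
Qed.

Lemma conj_i : conjc (imag_unit R) = - imag_unit R :> C.
Proof. by cxt. Qed.
Lemma i_neq0 : imag_unit R != 0 :> C.
Proof. by rewrite /imag_unit eq_complex /= oner_eq0 andbF. Qed.
Lemma i_sq : imag_unit R * imag_unit R = -1 :> C.
Proof. by cxt. Qed.

End Cx.

Lemma mval_gt0 (R : rcfType) (k : nat) (f : 'I_k -> R) x :
  (0 < mval f x)%N = (x \in [seq f j | j <- enum 'I_k]).
Proof.
rewrite /mval; apply/idP/mapP.
  by move/card_gt0P => [j]; rewrite inE => /eqP <-; exists j; rewrite ?mem_enum.
by case=> j _ ->; apply/card_gt0P; exists j; rewrite inE.
Qed.

Lemma lin4 (R : realFieldType) (a b c d : R) : a + b = c + d -> d - b = a - c.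
Proof. move=> h; lra. Qed.

Lemma natr_sub1 (R : numDomainType) (a b : nat) : a%:R - b%:R = 1 :> R -> a = b.+1.
Proof.
move/eqP; rewrite subr_eq addrC natr1 eqr_nat => /eqP //.
Qed.

Lemma natS_sub (R : numDomainType) (m : nat) : (m.+1)%:R - m%:R = 1 :> R.
Proof. by rewrite -natr1 addrAC subrr add0r. Qed.

Lemma sum_part2 (T : eqType) (K : nzRingType) (k : nat) (f : 'I_k -> T)
  (S : seq T) (H : 'I_k -> K) :
  uniq S -> (forall j, f j \in S) ->
  \sum_j H j = \sum_(u <- S) \sum_(j | f j == u) H j.
Proof.
move=> uS fS.
transitivity (\sum_j \sum_(u <- S | u == f j) H j).
  apply: eq_bigr => j _.
  by rewrite -big_filter filter_pred1_uniq // big_seq1.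
rewrite (exchange_big_dep predT) //=; apply: eq_bigr => u _.
by apply: eq_bigl => j; rewrite eq_sym.
Qed.

Lemma toC_sum (R : rcfType) (I : Type) (r : seq I) (P : pred I) (F : I -> R) :
  toC (\sum_(i <- r | P i) F i) = \sum_(i <- r | P i) toC (F i).
Proof. by rewrite toCE rmorph_sum. Qed.

Arguments conjc : simpl never.

Section Comb.
Variables (R : rcfType) (n : nat) (lam : 'I_n.+1 -> R) (mu : 'I_n -> R).
Hypothesis Hint : forall j : 'I_n,
  mu j <= lam (widen_ord (leqnSn n) j) /\ lam (lift ord0 j) <= mu j.

Lemma mu_noninc : forall i j : 'I_n, (i <= j)%N -> mu j <= mu i.
Proof.
apply: mono_step => a b hb.
have e : widen_ord (leqnSn n) b = lift ord0 a.
  by apply: val_inj; rewrite /= hb /bump leq0n add1n.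
by apply: le_trans (Hint b).1 _; rewrite e; exact: (Hint a).2.
Qed.

Lemma lam_noninc : forall i j : 'I_n.+1, (i <= j)%N -> lam j <= lam i.
Proof.
apply: mono_step => a b hb.
have ha : (a < n)%N by have := ltn_ord b; rewrite hb.
have e1 : b = lift ord0 (Ordinal ha) by apply: val_inj; rewrite /= hb /bump leq0n add1n.
have e2 : a = widen_ord (leqnSn n) (Ordinal ha) by apply: val_inj.
rewrite e1 {2}e2; apply: le_trans (Hint _).2 (Hint _).1.
Qed.

Lemma winj : injective (widen_ord (leqnSn n)).
Proof. by move=> x y /(congr1 val) /= /val_inj. Qed.

Lemma cnt_interlace (P : pred R) : (forall x y, x <= y -> P x -> P y) ->
  (#|[pred j | P (mu j)]| <= #|[pred j | P (lam j)]|)%N /\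
  (#|[pred j | P (lam j)]| <= #|[pred j | P (mu j)]|.+1)%N.
Proof.
move=> hP; split.
  rewrite -(card_imset _ winj).
  apply: subset_leq_card; apply/subsetP => j /imsetP [k kP ->].
  by rewrite inE /=; apply: hP (Hint k).1 _.
apply: leq_trans (_ : #|ord0 |: [set lift ord0 k | k in [pred j | P (mu j)]]| <= _)%N.
  apply: subset_leq_card; apply/subsetP => j; rewrite inE /= => Pj; rewrite !inE.
  case: (unliftP ord0 j) Pj => [k -> Pk|->]; last by rewrite eqxx.
  apply/orP; right; apply/imsetP; exists k => //.
  by rewrite inE /=; apply: hP (Hint k).2 Pk.
rewrite cardsU1 card_imset; last exact: lift_inj.
by case: (_ \notin _).
Qed.

Lemma mval_split (k : nat) (f : 'I_k -> R) v :
  #|[pred j | v <= f j]| = addn #|[pred j | v < f j]| (mval f v).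
Proof.
rewrite /mval -(cardID [pred j | v < f j] [pred j | v <= f j]).
congr (_ + _)%N; apply: eq_card => j; rewrite !inE /=.
  by case: (ltgtP (f j) v).
by case: (ltgtP (f j) v).
Qed.

Lemma shape_facts v :
  [/\ (mval lam v + isMshape lam mu v = mval mu v + isWshape lam mu v)%N,
      isMshape lam mu v -> #|[pred j | v < lam j]| = #|[pred j | v < mu j]|.+1 ,
      ~~ isPshape lam mu v -> ~~ isMshape lam mu v -> isWshape lam mu v &
      ~~ (isMshape lam mu v && isWshape lam mu v)].
Proof.
have [h1 h2] := @cnt_interlace (fun x => v < x) (fun x y h1 h2 => lt_le_trans h2 h1).
have [h3 h4] := @cnt_interlace (fun x => v <= x) (fun x y h1 h2 => le_trans h2 h1).
have e1 := mval_split lam v; have e2 := mval_split mu v.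
simpl in h1, h2, h3, h4.
rewrite /isMshape /isWshape /isPshape.
case: eqP => ?; case: eqP => ?; case: eqP => ? /=; split => //; lia.
Qed.



Definition sblk (u : R) := #|[pred j : 'I_n | u < mu j]|.
Definition firstb (j : 'I_n) := [forall k : 'I_n, (k < j)%N ==> (mu k != mu j)].

Lemma blk_lt u j : (u < mu j) = (j < sblk u)%N.
Proof.
have := @prefixP n [pred j | u < mu j] _ j; apply.
by move=> a b ab /= h; exact: lt_le_trans h (mu_noninc ab).
Qed.

Lemma blk_le u j : (u <= mu j) = (j < sblk u + mval mu u)%N.
Proof.
rewrite /sblk -mval_split.
have := @prefixP n [pred j | u <= mu j] _ j; apply.
by move=> a b ab /= h; exact: le_trans h (mu_noninc ab).
Qed.

Lemma blk_eq u j : (mu j == u) = (sblk u <= j < sblk u + mval mu u)%N.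
Proof. by rewrite eq_le leNgt blk_lt blk_le -leqNgt. Qed.

Lemma blk_bound u : (sblk u + mval mu u <= n)%N.
Proof.
rewrite /sblk -mval_split.
by apply: leq_trans (max_card _) _; rewrite card_ord.
Qed.

Lemma first_iff j : firstb j = (val j == sblk (mu j)).
Proof.
have := blk_eq (mu j) j; rewrite eqxx => /esym /andP [h1 h2].
apply/forallP/eqP.
  move=> H; apply/eqP; rewrite eqn_leq h1 andbT leqNgt; apply/negP => lt.
  have hs : (sblk (mu j) < n)%N by have := ltn_ord j; lia.
  have := H (Ordinal hs); rewrite /= lt /=.
  by rewrite blk_eq /= leqnn /=; lia.
move=> e k; apply/implyP => kj.
have : mu j < mu k by rewrite blk_lt -e.
by move=> h; rewrite eq_sym lt_eqF.
Qed.

Lemma first_card u : (0 < mval mu u)%N ->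
  #|[pred j | (mu j == u) && firstb j]| = 1%N.
Proof.
move=> hm.
have hs : (sblk u < n)%N by have := blk_bound u; lia.
apply: (@eq_card1 _ (Ordinal hs)) => j; rewrite !inE first_iff.
apply/andP/eqP.
  by case=> /eqP e /eqP f; apply: val_inj => /=; rewrite f e.
move=> ->; have e : mu (Ordinal hs) == u by rewrite blk_eq /= leqnn /=; lia.
by split => //; rewrite (eqP e).
Qed.

Lemma first_blk u j : (0 < mval mu u)%N -> val j = sblk u -> mu j = u.
Proof. by move=> hm hj; apply/eqP; rewrite blk_eq hj leqnn /=; lia. Qed.

Definition Sv : seq R :=
  undup ([seq lam j | j <- enum 'I_n.+1] ++ [seq mu j | j <- enum 'I_n]).
Definition Wl := [seq u <- Sv | isWshape lam mu u].
Definition Ml := [seq u <- Sv | isMshape lam mu u].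

Lemma Sv_uniq : uniq Sv. Proof. exact: undup_uniq. Qed.
Lemma lam_in j : lam j \in Sv.
Proof. by rewrite mem_undup mem_cat map_f ?mem_enum. Qed.
Lemma mu_in j : mu j \in Sv.
Proof. by rewrite mem_undup mem_cat orbC map_f ?mem_enum. Qed.
Lemma Wl_uniq : uniq Wl. Proof. exact/filter_uniq/Sv_uniq. Qed.
Lemma Ml_uniq : uniq Ml. Proof. exact/filter_uniq/Sv_uniq. Qed.

Lemma key_diff u :
  (isWshape lam mu u)%:R - (isMshape lam mu u)%:R =
  (mval lam u)%:R - (mval mu u)%:R :> R.
Proof.
have [e _ _ _] := shape_facts u.
move: e => /(congr1 (fun x => x%:R : R)); rewrite !natrD; exact: lin4.
Qed.

Lemma sum_filter_ind (s : seq R) (P : pred R) (F : R -> R) :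
  \sum_(u <- [seq u <- s | P u]) F u = \sum_(u <- s) F u * (P u)%:R.
Proof.
rewrite big_filter big_mkcond; apply: eq_bigr => u _.
by case: (P u); rewrite ?mulr1 ?mulr0.
Qed.

Lemma WM_sum (F : R -> R) :
  \sum_(u <- Wl) F u - \sum_(u <- Ml) F u =
  \sum_j F (lam j) - \sum_j F (mu j).
Proof.
rewrite !sum_filter_ind -sumrB.
have e1 := (sum_part F Sv_uniq lam_in).
have e2 := (sum_part F Sv_uniq mu_in).
transitivity (\sum_(u <- Sv) F u * (#|[pred j | lam j == u]|)%:R - \sum_(u <- Sv) F u * (#|[pred j | mu j == u]|)%:R); last first.
  congr (_ - _); [exact: (esym e1) | exact: (esym e2)].
rewrite -[in RHS]sumrB.
apply: eq_bigr => u _; rewrite -!mulrBr; congr (_ * _).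
exact: key_diff.
Qed.

Lemma sum1_size (s : seq R) : \sum_(u <- s) (1 : R) = (size s)%:R.
Proof. by elim: s => [|a s IH]; rewrite ?big_nil ?big_cons //= IH -natr1 addrC. Qed.

Lemma size_WM : size Wl = (size Ml).+1.
Proof.
have := WM_sum (fun _ => 1).
rewrite [\sum_(u <- Wl) _]sum1_size [\sum_(u <- Ml) _]sum1_size.
rewrite !sumr_const !card_ord natS_sub; exact: natr_sub1.
Qed.

Lemma c_eq : cconst lam mu = \sum_(u <- Wl) u - \sum_(u <- Ml) u.
Proof. by rewrite (WM_sum id). Qed.

Lemma sum_ind (k : nat) (P : pred 'I_k) : \sum_j (P j)%:R = (#|P|)%:R :> R.
Proof.
rewrite -sumr_const [RHS]big_mkcond /=; apply: eq_bigr => j _.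
by rewrite unfold_in; case: (P j).
Qed.

Lemma sum_seq_ind (s : seq R) (b : pred R) :
  \sum_(u <- s) (b u)%:R = (count b s)%:R :> R.
Proof.
by elim: s => [|a s IH]; rewrite ?big_nil ?big_cons //= IH natrD.
Qed.

Lemma cnt_gt v : isMshape lam mu v ->
  count (fun u => v < u) Wl = (count (fun u => v < u) Ml).+1.
Proof.
move=> hM; have [_ h _ _] := shape_facts v; have {}h := h hM.
have := WM_sum (fun u => ((v < u)%R : nat)%:R).
rewrite [\sum_(u <- Wl) _]sum_seq_ind [\sum_(u <- Ml) _]sum_seq_ind.
rewrite (sum_ind [pred j | v < lam j]) (sum_ind [pred j | v < mu j]) h natS_sub.
exact: natr_sub1.
Qed.

Lemma W_mval u : isWshape lam mu u -> (0 < mval lam u)%N.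
Proof. by rewrite /isWshape => /eqP ->. Qed.
Lemma M_mval u : isMshape lam mu u -> (0 < mval mu u)%N.
Proof. by rewrite /isMshape => /eqP ->. Qed.

Lemma dvals_mem (k : nat) (f : 'I_k -> R) x : (x \in dvals f) = (0 < mval f x)%N.
Proof. by rewrite /dvals mem_sort mem_undup mval_gt0. Qed.
Lemma dvals_uniq (k : nat) (f : 'I_k -> R) : uniq (dvals f).
Proof. by rewrite /dvals sort_uniq undup_uniq. Qed.

Lemma Sv_lam x : (0 < mval lam x)%N -> x \in Sv.
Proof. by rewrite mval_gt0 => /mapP [j _ ->]; exact: lam_in. Qed.
Lemma Sv_mu x : (0 < mval mu x)%N -> x \in Sv.
Proof. by rewrite mval_gt0 => /mapP [j _ ->]; exact: mu_in. Qed.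

Lemma prodW (F : R -> R) :
  \prod_(l <- dvals lam | isWshape lam mu l) F l = \prod_(l <- Wl) F l.
Proof.
rewrite -big_filter; apply: perm_big; apply: uniq_perm.
- exact/filter_uniq/dvals_uniq.
- exact: Wl_uniq.
move=> x; rewrite !mem_filter dvals_mem.
case W: (isWshape lam mu x) => //=.
by rewrite (W_mval W) (Sv_lam (W_mval W)).
Qed.

Lemma prodM (F : R -> R) v :
  \prod_(t <- dvals mu | isMshape lam mu t && (t != v)) F t =
  \prod_(t <- Ml | t != v) F t.
Proof.
rewrite -big_filter_cond; apply: perm_big; apply: uniq_perm.
- exact/filter_uniq/dvals_uniq.
- exact: Ml_uniq.
move=> x; rewrite !mem_filter dvals_mem.
case M: (isMshape lam mu x) => //=.
by rewrite (M_mval M) (Sv_mu (M_mval M)).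
Qed.

Lemma prod_sign (s : seq R) v : v \notin s ->
  0 < (-1) ^+ count (fun l => v < l) s * \prod_(l <- s) (v - l).
Proof.
elim: s => [|a s IH] /=; first by rewrite big_nil mulr1 ltr01.
rewrite inE negb_or => /andP [hva hs]; rewrite big_cons.
have {}IH := IH hs.
case: (ltgtP v a) hva => h hva //.
  rewrite add1n exprS.
  have -> : -1 * (-1) ^+ count (fun l => v < l) s * ((v - a) * \prod_(j <- s) (v - j))
     = ((-1) ^+ count (fun l => v < l) s * \prod_(j <- s) (v - j)) * (a - v) by ring.
  by apply: mulr_gt0 => //; rewrite subr_gt0.
rewrite add0n.
have -> : (-1) ^+ count (fun l => v < l) s * ((v - a) * \prod_(j <- s) (v - j))
     = ((-1) ^+ count (fun l => v < l) s * \prod_(j <- s) (v - j)) * (v - a) by ring.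
by apply: mulr_gt0 => //; rewrite subr_gt0.
Qed.

Lemma rsq_pos v : isMshape lam mu v -> 0 < rsq lam mu v.
Proof.
move=> hM; rewrite /rsq prodW prodM.
have [_ _ _ hnb] := shape_facts v.
have hW : v \notin Wl.
  by rewrite mem_filter; move: hnb; rewrite hM /= => /negbTE ->.
have h1 := prod_sign hW.
have hv : v \notin [seq t <- Ml | t != v] by rewrite mem_filter eqxx.
have h2 := prod_sign hv.
rewrite prodfV -[\prod_(i <- Ml | i != v) _]big_filter.
have ec : count (fun l => v < l) [seq t <- Ml | t != v] = count (fun l => v < l) Ml.
  rewrite count_filter; apply: eq_count => t /=.
  by case: (ltgtP v t) => // ->; rewrite eqxx.
move: h1 h2; rewrite ec (cnt_gt hM) exprS.
set e := (-1) ^+ _; set X := \prod_(l <- Wl) _; set Y := \prod_(t <- _) _.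
move=> h1 h2.
have he : e != 0 by rewrite expf_neq0 // oppr_eq0 oner_eq0.
have hY : Y != 0.
  by apply/negP => /eqP hY; move: h2; rewrite hY mulr0 ltxx.
have -> : - X * Y^-1 = (-1 * e * X) / (e * Y) by field; rewrite he hY.
exact: divr_gt0.
Qed.

Definition Ppol : {poly R} := \prod_(u <- Wl) ('X - u%:P).
Definition Qpol : {poly R} := \prod_(u <- Ml) ('X - u%:P).
Definition Qu (t : R) : {poly R} := \prod_(u <- Ml | u != t) ('X - u%:P).

Lemma Qu_self t : (Qu t).[t] != 0.
Proof.
rewrite /Qu horner_prod prodf_seq_neq0; apply/allP => u _.
by apply/implyP; rewrite hornerXsubC subr_eq0 eq_sym.
Qed.

Lemma Qu_other t u : u \in Ml -> u != t -> (Qu t).[u] = 0.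
Proof.
move=> hu hut; rewrite /Qu horner_prod -big_filter.
rewrite (bigD1_seq u) /=; first by rewrite hornerXsubC subrr mul0r.
  by rewrite mem_filter hut.
exact/filter_uniq/Ml_uniq.
Qed.

Lemma Q_split t v : t \in Ml -> Qpol.[v] = (v - t) * (Qu t).[v].
Proof.
move=> ht; rewrite /Qpol /Qu !horner_prod (bigD1_seq t) //=; last exact: Ml_uniq.
by rewrite hornerXsubC.
Qed.

Lemma size_Qu t : t \in Ml -> size (Qu t) = size Ml.
Proof.
move=> ht; rewrite /Qu -big_filter size_prod_XsubC -rem_filter ?Ml_uniq //.
rewrite size_rem // prednK // lt0n; apply/negP => /eqP/size0nil e.
by rewrite e in ht.
Qed.

Lemma size_Qpol : size Qpol = (size Ml).+1.
Proof. by rewrite /Qpol size_prod_XsubC. Qed.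
Lemma size_Ppol : size Ppol = (size Ml).+2.
Proof. by rewrite /Ppol size_prod_XsubC size_WM. Qed.

Lemma poly_id :
  Ppol = ('X - (cconst lam mu)%:P) * Qpol +
         \sum_(t <- Ml) (Ppol.[t] / (Qu t).[t]) *: Qu t.
Proof.
set c := cconst lam mu; set k := size Ml.
set A := Ppol - ('X - c%:P) * Qpol.
set B := \sum_(t <- Ml) (Ppol.[t] / (Qu t).[t]) *: Qu t.
have mQ : Qpol \is monic by apply: monic_prod_XsubC.
have mP : Ppol \is monic by apply: monic_prod_XsubC.
have sB : size (('X - c%:P) * Qpol) = k.+2.
  by rewrite size_Mmonic ?size_XsubC ?size_Qpol // -size_poly_eq0 size_XsubC.
have lB : lead_coef (('X - c%:P) * Qpol) = 1.
  by apply/monicP; rewrite monicMl // monicXsubC.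
have hA : (size A <= k)%N.
  apply/leq_sizeP => j hj; rewrite /A coefB.
  case: (ltngtP j k.+1) => hj2.
  - have -> : j = k by lia.
    have -> : Ppol`_k = - \sum_(u <- Wl) u.
      have := @coefPn_prod_XsubC R Wl; rewrite size_WM /= => ->; rewrite ?size_WM //.
    rewrite mulrBl coefB coefXM coefCM.
    have -> : Qpol`_k = 1 by have := monicP mQ; rewrite lead_coefE size_Qpol.
    have -> : (if k == 0%N then 0 else Qpol`_k.-1) = - \sum_(u <- Ml) u.
      case: eqP => hk.
        by rewrite /k in hk; rewrite (size0nil hk) big_nil oppr0.
      have := @coefPn_prod_XsubC R Ml; rewrite -/k -/Qpol => -> //.
      by apply/eqP.
    rewrite /c c_eq; ring.
  - rewrite (nth_default 0 (_ : size Ppol <= j)%N) ?size_Ppol //.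
    by rewrite (nth_default 0 (_ : leq (size (('X - c%:P) * Qpol)) j)) ?sB // subrr.
  - rewrite hj2.
    have e1 : Ppol`_k.+1 = 1 by have := monicP mP; rewrite lead_coefE size_Ppol.
    have e2 : (('X - c%:P) * Qpol)`_k.+1 = 1 by move: lB; rewrite lead_coefE sB.
    by rewrite e1 e2 subrr.
have hB : (size B <= k)%N.
  rewrite /B big_seq; apply: (big_ind (fun p : {poly R} => size p <= k)%N).
  - by rewrite size_poly0.
  - move=> p q hp hq; apply: leq_trans (size_polyD _ _) _.
    by rewrite geq_max hp hq.
  move=> t ht; apply: leq_trans (size_scale_leq _ _) _.
  by rewrite size_Qu.
apply/eqP; rewrite -subr_eq0 opprD addrA -/A -/B; apply/negPn/negP => hD.
have := max_poly_roots hD _ Ml_uniq.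
have -> : all (root (A - B)) Ml.
  apply/allP => u hu; rewrite rootE /A /B !hornerE horner_sum.
  rewrite (@Q_split u u) // subrr mul0r mulr0 subr0.
  rewrite (bigD1_seq u) //= ?Ml_uniq // hornerZ divfK ?Qu_self //.
  rewrite big1_seq ?addr0 ?subrr // => t /andP [htu ht].
  by rewrite hornerZ (Qu_other hu) ?mulr0 // eq_sym.
move=> /(_ isT) h.
have := leq_trans h (leq_trans (size_polyD _ _) _).
rewrite size_polyN => /(_ k); rewrite geq_max hA hB ltnn; by move=> /(_ isT).
Qed.

Definition kap (v : R) := cconst lam mu - v + \sum_(t <- Ml) rsq lam mu t / (v - t).

Lemma rsq_eval t : rsq lam mu t = - Ppol.[t] / (Qu t).[t].
Proof.
rewrite /rsq prodW prodM prodfV /Ppol /Qu !horner_prod.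
by congr (- _ * _^-1); apply: eq_bigr => u _; rewrite hornerXsubC.
Qed.

Lemma kap_eq v : v \notin Ml -> kap v * Qpol.[v] = - Ppol.[v].
Proof.
move=> hv.
have e := congr1 (fun p => p.[v]) poly_id; simpl in e.
rewrite hornerD hornerM hornerXsubC horner_sum in e.
have hs : (\sum_(t <- Ml) rsq lam mu t / (v - t)) * Qpol.[v] =
          - \sum_(t <- Ml) ((Ppol.[t] / (Qu t).[t]) *: Qu t).[v].
  rewrite mulr_suml -sumrN big_seq [RHS]big_seq; apply: eq_bigr => t ht.
  rewrite hornerZ rsq_eval (@Q_split t v ht).
  have hvt : v - t != 0 by rewrite subr_eq0; apply/eqP => evt; move: hv; rewrite evt ht.
  have := Qu_self t; move: (Qu t).[t] => a ha.
  by field; rewrite hvt ha.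
rewrite /kap mulrDl hs e; ring.
Qed.

Lemma kap_zero v : v \notin Ml -> v \in Sv -> (kap v == 0) = isWshape lam mu v.
Proof.
move=> hv hS.
have hQ : Qpol.[v] != 0 by rewrite -rootE /Qpol root_prod_XsubC.
apply/idP/idP.
  move/eqP => h0; have := kap_eq hv; rewrite h0 mul0r => /esym/eqP.
  rewrite oppr_eq0 -rootE /Ppol root_prod_XsubC mem_filter => /andP [] //.
move=> hW; have := kap_eq hv.
have -> : Ppol.[v] = 0.
  by apply/eqP; rewrite -rootE /Ppol root_prod_XsubC mem_filter hW.
by rewrite oppr0 => /eqP; rewrite mulf_eq0 (negbTE hQ) orbF.
Qed.

Lemma sum_first (F : R -> R) :
  \sum_j (if firstb j then F (mu j) else 0) =
  \sum_(u <- Sv) (if (0 < mval mu u)%N then F u else 0).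
Proof.
rewrite (sum_part2 _ Sv_uniq mu_in); apply: eq_bigr => u _.
rewrite -big_mkcondr /=.
transitivity (\sum_(j | (mu j == u) && firstb j) F u).
  by apply: eq_bigr => j /andP [/eqP -> _].
rewrite sumr_const.
case: ifP => hm; first by rewrite (first_card hm).
have : #|[pred j | (mu j == u) && firstb j]| = 0%N.
  apply/eqP; rewrite -leqn0; move/negbT: hm; rewrite -leqNgt => hm.
  apply: leq_trans hm; apply/subset_leq_card/subsetP => j; rewrite !inE.
  by case/andP.
by move=> ->.
Qed.

Definition zr (j : 'I_n) : R := if firstb j then rval lam mu (mu j) else 0.
Local Notation p := (ptilde lam mu).
Local Notation z := (zvec lam mu).
Local Notation c := (cconst lam mu).

Lemma zvecE j : z j = toC (zr j).
Proof. by rewrite /zvec /zr /firstb; case: ifP. Qed.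

Lemma conj_z j : conjc (z j) = z j.
Proof. by rewrite zvecE conj_toC. Qed.

Lemma pE00 : p ord0 ord0 = toC c.
Proof. by rewrite /ptilde mxE unlift_none. Qed.
Lemma pE0k k : p ord0 (lift ord0 k) = conjc (z k).
Proof. by rewrite /ptilde mxE unlift_none liftK. Qed.
Lemma pEj0 j : p (lift ord0 j) ord0 = z j.
Proof. by rewrite /ptilde mxE unlift_none liftK. Qed.
Lemma pEjk j k : p (lift ord0 j) (lift ord0 k) = if j == k then toC (mu j) else 0.
Proof. by rewrite /ptilde mxE !liftK. Qed.

Lemma mulE (A B : 'M[R[i]]_n.+1) a b :
  (A *m B) a b = A a ord0 * B ord0 b + \sum_k A a (lift ord0 k) * B (lift ord0 k) b.
Proof. by rewrite mxE big_ord_recl. Qed.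

Lemma sum_deltal (F : 'I_n -> R[i]) j (a : R[i]) :
  \sum_k (if j == k then a else 0) * F k = a * F j.
Proof.
rewrite (bigD1 j) //= eqxx big1 ?addr0 // => k hk.
by rewrite eq_sym (negbTE hk) mul0r.
Qed.
Lemma sum_deltar (F : 'I_n -> R[i]) j (a : 'I_n -> R[i]) :
  \sum_k F k * (if k == j then a k else 0) = F j * a j.
Proof.
rewrite (bigD1 j) //= eqxx big1 ?addr0 // => k hk.
by rewrite (negbTE hk) mulr0.
Qed.

Lemma LXp_j0 (X : 'M[R[i]]_n.+1) j :
  lie X p (lift ord0 j) ord0 =
  X (lift ord0 j) ord0 * toC c + \sum_k X (lift ord0 j) (lift ord0 k) * z k
  - (z j * X ord0 ord0 + toC (mu j) * X (lift ord0 j) ord0).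
Proof.
rewrite /lie !mxE !big_ord_recl pE00 pEj0.
congr (_ + _ - (_ + _)); first by apply: eq_bigr => k _; rewrite pEj0.
rewrite -(sum_deltal (fun k => X (lift ord0 k) ord0) j (toC (mu j))).
by apply: eq_bigr => k _; rewrite pEjk; case: eqP => // ->.
Qed.

Lemma LXp_jk (X : 'M[R[i]]_n.+1) j k :
  lie X p (lift ord0 j) (lift ord0 k) =
  X (lift ord0 j) ord0 * conjc (z k) + X (lift ord0 j) (lift ord0 k) * toC (mu k)
  - (z j * X ord0 (lift ord0 k) + toC (mu j) * X (lift ord0 j) (lift ord0 k)).
Proof.
rewrite /lie !mxE !big_ord_recl pE0k pEj0.
congr (_ + _ - (_ + _)).
  rewrite -(sum_deltar (fun l => X (lift ord0 j) (lift ord0 l)) k (fun l => toC (mu l))).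
  by apply: eq_bigr => l _; rewrite pEjk; case: eqP.
rewrite -(sum_deltal (fun l => X (lift ord0 l) (lift ord0 k)) j (toC (mu j))).
by apply: eq_bigr => l _; rewrite pEjk; case: eqP => // ->.
Qed.

Lemma d0E (Y : 'M[R[i]]_n) b : diag0 Y ord0 b = 0.
Proof. by rewrite /diag0 mxE unlift_none. Qed.
Lemma dE0 (Y : 'M[R[i]]_n) a : diag0 Y a ord0 = 0.
Proof. by rewrite /diag0 mxE unlift_none; case: unlift. Qed.
Lemma dEjk (Y : 'M[R[i]]_n) j k : diag0 Y (lift ord0 j) (lift ord0 k) = Y j k.
Proof. by rewrite /diag0 mxE !liftK. Qed.

Lemma adjE (d : nat) (A : 'M[R[i]]_d) a b : adjmx A a b = conjc (A b a).
Proof. by rewrite /adjmx !mxE. Qed.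

Lemma omega_formula (X : 'M[R[i]]_n.+1) (Y : 'M[R[i]]_n) :
  omegaKKS p X (diag0 Y) =
  - (imag_unit R)^-1 * \sum_j \sum_k lie X p (lift ord0 j) (lift ord0 k) * Y k j.
Proof.
rewrite /omegaKKS.
have -> : \tr (p *m lie X (diag0 Y)) = - \tr (lie X p *m diag0 Y).
  rewrite /lie mulmxBr mulmxBl !raddfB /= !mulmxA.
  by rewrite (mxtrace_mulC (p *m diag0 Y) X) !mulmxA opprK addrC.
rewrite mulrN mulNr; congr (- (_ * _)).
rewrite /mxtrace big_ord_recl.
rewrite mulE d0E mulr0 add0r big1 ?add0r; last by move=> k _; rewrite dE0 mulr0.
apply: eq_bigr => j _; rewrite mulE d0E mulr0 add0r.
by apply: eq_bigr => k _; rewrite dEjk.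
Qed.

Lemma sum2_delta (F : 'I_n -> 'I_n -> R[i]) r s :
  \sum_j \sum_k F j k * delta_mx r s k j = F s r.
Proof.
rewrite (bigD1 s) //= [X in _ + X]big1 ?addr0; last first.
  move=> a has; apply: big1 => b _; rewrite mxE (negbTE has) andbF mulr0 //.
rewrite (bigD1 r) //= [X in _ + X]big1 ?addr0; last first.
  by move=> b hbr; rewrite mxE (negbTE hbr) mulr0.
by rewrite mxE !eqxx mulr1.
Qed.

Lemma skew_d1 (r s : 'I_n) : skewH (delta_mx r s - delta_mx s r : 'M[R[i]]_n).
Proof.
apply/matrixP => a b; rewrite adjE !mxE cjB !conjc_nat.
by rewrite opprB [(a == r) && _]andbC [(a == s) && _]andbC.
Qed.

Lemma skew_d2 (r s : 'I_n) :
  skewH (imag_unit R *: (delta_mx r s + delta_mx s r) : 'M[R[i]]_n).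
Proof.
apply/matrixP => a b; rewrite adjE !mxE cjM cjD !conjc_nat conj_i.
rewrite [(a == r) && _]andbC [(a == s) && _]andbC.
by rewrite mulNr addrC.
Qed.

Lemma omega_zero (X : 'M[R[i]]_n.+1) :
  (forall Y : 'M[R[i]]_n, skewH Y -> omegaKKS p X (diag0 Y) = 0) ->
  forall j k, lie X p (lift ord0 j) (lift ord0 k) = 0.
Proof.
move=> H j k.
set F := fun a b => lie X p (lift ord0 a) (lift ord0 b).
have hi : - (imag_unit R)^-1 != 0 by rewrite oppr_eq0 invr_eq0 i_neq0.
have G : forall Y : 'M[R[i]]_n, skewH Y -> \sum_a \sum_b F a b * Y b a = 0.
  move=> Y hY; have := H Y hY; rewrite omega_formula => /eqP.
  by rewrite mulf_eq0 (negbTE hi) /= => /eqP.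
have h1 := G _ (skew_d1 k j).
have h2 := G _ (skew_d2 k j).
have e1 : F j k - F k j = 0.
  rewrite -h1 -(sum2_delta F k j) -(sum2_delta F j k) -sumrB.
  apply: eq_bigr => a _; rewrite -sumrB; apply: eq_bigr => b _.
  by rewrite !mxE mulrBr.
have e2 : imag_unit R * (F j k + F k j) = 0.
  rewrite -h2 -(sum2_delta F k j) -(sum2_delta F j k) -big_split mulr_sumr.
  apply: eq_bigr => a _; rewrite -big_split mulr_sumr; apply: eq_bigr => b _ /=.
  rewrite !mxE; ring.
move/eqP: e2; rewrite mulf_eq0 (negbTE (i_neq0 R)) /= => /eqP e2.
have : F j k *+ 2 = 0.
  have -> : F j k *+ 2 = (F j k - F k j) + (F j k + F k j) by rewrite mulr2n; ring.
  by rewrite e1 e2 addr0.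
by move/eqP; rewrite mulrn_eq0 /= => /eqP.
Qed.

Lemma omega_of_zero (X : 'M[R[i]]_n.+1) :
  (forall j k, lie X p (lift ord0 j) (lift ord0 k) = 0) ->
  forall Y, skewH Y -> omegaKKS p X (diag0 Y) = 0.
Proof.
move=> H Y _; rewrite omega_formula big1 ?mulr0 // => j _.
by rewrite big1 // => k _; rewrite H mul0r.
Qed.

Lemma Vsp_elim v : Vsp p v -> exists X : 'M[R[i]]_n.+1,
  [/\ skewH X, (forall j k, lie X p (lift ord0 j) (lift ord0 k) = 0) &
      forall j, v j ord0 = lie X p (lift ord0 j) ord0].
Proof.
case=> xi [X [hX -> hom]] <-; exists X; split => //; first exact: omega_zero.
by move=> j; rewrite /Tmap mxE.
Qed.

Lemma Vsp_intro (X : 'M[R[i]]_n.+1) : skewH X ->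
  (forall j k, lie X p (lift ord0 j) (lift ord0 k) = 0) -> Vsp p (Tmap (lie X p)).
Proof.
move=> hX H; exists (lie X p) => //; exists X; split => //.
exact: omega_of_zero.
Qed.

Lemma skewE (d : nat) (Y : 'M[R[i]]_d) : skewH Y -> forall a b, conjc (Y b a) = - Y a b.
Proof. by rewrite /skewH => hY a b; have := congr1 (fun M : 'M[R[i]]_d => M a b) hY; rewrite /= adjE mxE. Qed.

Lemma diag0_skew (Y : 'M[R[i]]_n) : skewH Y -> skewH (diag0 Y).
Proof.
move=> hY; apply/matrixP => a b; rewrite adjE [X in _ = X]mxE.
case: (unliftP ord0 a) => [j ->|->]; case: (unliftP ord0 b) => [k ->|->];
  rewrite ?d0E ?dE0 ?dEjk ?cj0 ?oppr0 //.
exact: (skewE hY).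
Qed.

Lemma LXp_diag_jk (Y : 'M[R[i]]_n) j k :
  lie (diag0 Y) p (lift ord0 j) (lift ord0 k) = Y j k * (toC (mu k) - toC (mu j)).
Proof. by rewrite LXp_jk dE0 d0E dEjk; ring. Qed.

Lemma LXp_diag_j0 (Y : 'M[R[i]]_n) j :
  lie (diag0 Y) p (lift ord0 j) ord0 = \sum_k Y j k * z k.
Proof.
rewrite LXp_j0 dE0 d0E; under eq_bigr do rewrite dEjk.
by rewrite !mulr0 mul0r !add0r subr0.
Qed.

Lemma Usp_intro (Y : 'M[R[i]]_n) : skewH Y ->
  (forall j k, mu j != mu k -> Y j k = 0) -> Usp p (Tmap (lie (diag0 Y) p)).
Proof.
move=> hY H; exists (lie (diag0 Y) p); split => //.
  by exists Y.
exists (diag0 Y); split => //; first exact: diag0_skew.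
apply: omega_of_zero => j k; rewrite LXp_diag_jk.
case: (eqVneq (mu j) (mu k)) => [->|hne]; first by rewrite subrr mulr0.
by rewrite H // mul0r.
Qed.

Lemma Usp_elim v : Usp p v -> exists Y : 'M[R[i]]_n,
  (forall j k, Y j k * (toC (mu k) - toC (mu j)) = 0) /\
  (forall j, v j ord0 = \sum_k Y j k * z k).
Proof.
case=> xi [[Y [hY exi]] [X [hX exi2 hom]] <-]; exists Y; split.
  by move=> j k; have := omega_zero hom j k; rewrite -exi2 exi LXp_diag_jk.
by move=> j; rewrite /Tmap mxE exi LXp_diag_j0.
Qed.

Lemma skew0 (d : nat) : skewH (0 : 'M[R[i]]_d).
Proof. by apply/matrixP => a b; rewrite adjE !mxE cj0 oppr0. Qed.

Lemma Usp0 : Usp p 0.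
Proof.
have e : Tmap (lie (diag0 0) p) = 0.
  apply/matrixP => j l; rewrite mxE LXp_diag_j0 big1 ?mxE // => k _.
  by rewrite mxE mul0r.
rewrite -e; apply: Usp_intro; first exact: skew0.
by move=> j k _; rewrite mxE.
Qed.

Lemma blockval_pos i : (i < mblocks mu)%N -> (0 < mval mu (blockval mu i))%N.
Proof. by move=> hi; rewrite -dvals_mem /blockval mem_nth. Qed.

Lemma proj_idx i (k : 'I_(blocksize mu i)) : (blockstart mu i + k < n)%N.
Proof.
have := blk_bound (blockval mu i); rewrite /blockstart /blocksize -/(sblk _).
by have := ltn_ord k; rewrite /blocksize; lia.
Qed.

Lemma proj_mu i (k : 'I_(blocksize mu i)) : mu (Ordinal (proj_idx k)) = blockval mu i.
Proof.
apply/eqP; rewrite blk_eq /=; rewrite /blockstart -/(sblk _) leq_addr /=.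
by rewrite ltn_add2l; exact: ltn_ord.
Qed.

Lemma projblockE i (w : 'cV[R[i]]_n) (k : 'I_(blocksize mu i)) :
  projblock mu i w k ord0 = w (Ordinal (proj_idx k)) ord0.
Proof.
rewrite /projblock mxE (nth_map (Ordinal (proj_idx k))) ?size_enum_ord ?proj_idx //.
by rewrite -[(blockstart mu i + k)%N]/(nat_of_ord (Ordinal (proj_idx k))) nth_ord_enum.
Qed.

Lemma projblock_eq i (w1 w2 : 'cV[R[i]]_n) :
  (forall j, mu j = blockval mu i -> w1 j ord0 = w2 j ord0) ->
  projblock mu i w1 = projblock mu i w2.
Proof.
move=> H; apply/matrixP => k l; rewrite (ord1 l) !projblockE.
by apply: H; exact: proj_mu.
Qed.

Lemma projblock0 i : projblock mu i (0 : 'cV[R[i]]_n) = 0.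
Proof. by apply/matrixP => k l; rewrite (ord1 l) projblockE !mxE. Qed.

Definition ext i (y : 'cV[R[i]]_(blocksize mu i)) : 'cV[R[i]]_n :=
  \col_j (if (blockstart mu i <= j)%N then
            (match insub (j - blockstart mu i)%N with Some k => y k ord0 | None => 0 end)
          else 0).

Lemma projblock_ext i y : projblock mu i (@ext i y) = y.
Proof.
apply/matrixP => k l; rewrite (ord1 l) projblockE mxE /= leq_addr addKn.
case: (@insubP nat (fun x => (x < blocksize mu i)%N) 'I_(blocksize mu i) k) => [k' _ hk'|]; last by rewrite ltn_ord.
by congr (y _ _); apply: val_inj.
Qed.

Lemma ext_supp i y j : @ext i y j ord0 != 0 -> mu j = blockval mu i.
Proof.
rewrite mxE; case: ifP => [hs|_]; last by rewrite eqxx.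
case: (@insubP nat (fun x => (x < blocksize mu i)%N) 'I_(blocksize mu i) (j - blockstart mu i)%N) => [k' hk' hv _| _]; last by rewrite eqxx.
apply/eqP; rewrite blk_eq.
move: hs hk'; rewrite /blockstart /blocksize -/(sblk _); lia.
Qed.

Lemma zr_sum v : \sum_k zr k ^+ 2 / (v - mu k) = \sum_(t <- Ml) rsq lam mu t / (v - t).
Proof.
transitivity (\sum_k (if firstb k then rval lam mu (mu k) ^+ 2 / (v - mu k) else 0)).
  apply: eq_bigr => k _; rewrite /zr; case: (firstb k) => //; by rewrite expr0n mul0r.
transitivity (\sum_(u <- Sv) (if (0 < mval mu u)%N then rval lam mu u ^+ 2 / (v - u) else 0)).
  exact (sum_first (fun u => rval lam mu u ^+ 2 / (v - u))).
rewrite /Ml big_filter [RHS]big_mkcond; apply: eq_bigr => u _.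
rewrite /rval; case M: (isMshape lam mu u).
  by rewrite (M_mval M) sqr_sqrtr ?ltW ?rsq_pos.
by case: ifP; rewrite // expr0n mul0r.
Qed.

Lemma Tmap_nonM (X : 'M[R[i]]_n.+1) j :
  (forall k, mu k = mu j -> zr k = 0) ->
  (forall a b, lie X p (lift ord0 a) (lift ord0 b) = 0) ->
  lie X p (lift ord0 j) ord0 = X (lift ord0 j) ord0 * toC (kap (mu j)).
Proof.
move=> H Hz.
have zj : z j = 0 by rewrite zvecE (H j erefl).
rewrite LXp_j0 zj mul0r add0r.
have hs : forall k, X (lift ord0 j) (lift ord0 k) * z k =
    X (lift ord0 j) ord0 * toC (zr k ^+ 2 / (mu j - mu k)).
  move=> k; case: (eqVneq (mu k) (mu j)) => [ekj|nkj].
    by rewrite zvecE (H k ekj) expr0n mul0r toC0 !mulr0.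
  have e := Hz j k; rewrite LXp_jk conj_z zj mul0r add0r zvecE in e.
  have hne : toC (mu k) - toC (mu j) != 0.
    by rewrite -toCB toC_eq0 subr_eq0.
  have hne2 : toC (mu j) - toC (mu k) != 0.
    by rewrite -toCB toC_eq0 subr_eq0 eq_sym.
  set w := X (lift ord0 j) ord0 in e *; set B := X _ (lift ord0 k) in e *.
  have eB : B * (toC (mu k) - toC (mu j)) = - (w * toC (zr k)).
    by apply/eqP; rewrite -subr_eq0; apply/eqP; rewrite -e; ring.
  have -> : B = - (w * toC (zr k)) / (toC (mu k) - toC (mu j)) by rewrite -eB mulfK.
  rewrite zvecE toCM toCV toCB expr2 toCM; field.
  by rewrite hne hne2.
rewrite (eq_bigr _ (fun k _ => hs k)) -mulr_sumr -toC_sum zr_sum /kap.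
rewrite toCD toCB; ring.
Qed.

Lemma z_nonM i j : ~~ isMshape lam mu (blockval mu i) -> mu j = blockval mu i -> zr j = 0.
Proof. by move=> hM hj; rewrite /zr /rval hj (negbTE hM); case: firstb. Qed.

Lemma U_nonM i w : ~~ isMshape lam mu (blockval mu i) -> Ublock lam mu i w -> w = 0.
Proof.
move=> hM [v' hU <-]; have [Y [hY hv]] := Usp_elim hU.
rewrite -(projblock0 i); apply: projblock_eq => j hj.
rewrite hv mxE; apply: big1 => k _.
case: (eqVneq (mu k) (mu j)) => e.
  by rewrite zvecE (z_nonM hM (etrans e hj)) mulr0.
have := hY j k; move/eqP; rewrite mulf_eq0 => /orP [/eqP -> | ]; first by rewrite mul0r.
by rewrite -toCB toC_eq0 subr_eq0 (negbTE e).
Qed.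

Lemma V_W i w : ~~ isMshape lam mu (blockval mu i) -> kap (blockval mu i) = 0 ->
  Vblock lam mu i w -> w = 0.
Proof.
move=> hM hk [v' hV <-]; have [X [hX hZ hv]] := Vsp_elim hV.
rewrite -(projblock0 i); apply: projblock_eq => j hj.
have hz : forall k, mu k = mu j -> zr k = 0.
  by move=> k hk'; apply: (z_nonM hM); rewrite hk' hj.
by rewrite hv (Tmap_nonM hz hZ) hj hk toC0 mulr0 mxE.
Qed.

Section Xof.
Variable wv : 'I_n -> R[i].
Definition Xof : 'M[R[i]]_n.+1 := \matrix_(a, b)
  match unlift ord0 a, unlift ord0 b with
  | None, None => 0
  | None, Some k => - conjc (wv k)
  | Some j, None => wv j
  | Some j, Some k => if mu j == mu k then 0 else
      - (wv j * conjc (z k) + z j * conjc (wv k)) / (toC (mu k) - toC (mu j))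
  end.

Lemma Xof00 : Xof ord0 ord0 = 0. Proof. by rewrite mxE unlift_none. Qed.
Lemma Xof0k k : Xof ord0 (lift ord0 k) = - conjc (wv k).
Proof. by rewrite mxE unlift_none liftK. Qed.
Lemma Xofj0 j : Xof (lift ord0 j) ord0 = wv j.
Proof. by rewrite mxE unlift_none liftK. Qed.
Lemma Xofjk j k : Xof (lift ord0 j) (lift ord0 k) = if mu j == mu k then 0 else
      - (wv j * conjc (z k) + z j * conjc (wv k)) / (toC (mu k) - toC (mu j)).
Proof. by rewrite mxE !liftK. Qed.

Lemma Xof_skew : skewH Xof.
Proof.
apply/matrixP => a b; rewrite adjE [X in _ = X]mxE.
case: (unliftP ord0 a) => [j ->|->]; case: (unliftP ord0 b) => [k ->|->].
- rewrite !Xofjk eq_sym; case: eqP => [_|hne]; first by rewrite cj0 oppr0.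
  have h1 : toC (mu k) - toC (mu j) != 0.
    by rewrite -toCB toC_eq0 subr_eq0; apply/eqP => e; apply: hne.
  have h2 : toC (mu j) - toC (mu k) != 0.
    by rewrite -toCB toC_eq0 subr_eq0; apply/eqP => e; apply: hne.
  rewrite conj_frac !conj_z.
  by field; rewrite h1 h2.
- by rewrite Xof0k Xofj0 cjN cjK.
- by rewrite Xofj0 Xof0k opprK.
- by rewrite Xof00 cj0 oppr0.
Qed.

Lemma Xof_zero : (forall j k, mu j = mu k -> wv j * conjc (z k) + z j * conjc (wv k) = 0) ->
  forall j k, lie Xof p (lift ord0 j) (lift ord0 k) = 0.
Proof.
move=> H j k; rewrite LXp_jk Xofj0 Xof0k Xofjk.
case: eqP => [e|hne].
  transitivity (wv j * conjc (z k) + z j * conjc (wv k)); first by ring.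
  exact: H.
have h1 : toC (mu k) - toC (mu j) != 0.
  by rewrite -toCB toC_eq0 subr_eq0; apply/eqP => e; apply: hne.
by field.
Qed.
End Xof.

Lemma V_P i : (i < mblocks mu)%N -> ~~ isMshape lam mu (blockval mu i) ->
  kap (blockval mu i) != 0 -> forall y, Vblock lam mu i y.
Proof.
move=> hi hM hk y.
set v := blockval mu i; set t := @ext i y.
have hk' : toC (kap v) != 0 by rewrite toC_eq0.
set wv := fun j => if mu j == v then t j ord0 / toC (kap v) else 0.
have hZ : forall j k, lie (Xof wv) p (lift ord0 j) (lift ord0 k) = 0.
  apply: Xof_zero => j k ejk; rewrite /wv -ejk.
  case: eqP => [hj|hj].
    have zj : z j = 0 by rewrite zvecE (z_nonM hM hj).
    have zk : z k = 0 by rewrite zvecE (z_nonM hM (etrans (esym ejk) hj)).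
    by rewrite zj zk cj0 mulr0 mul0r addr0.
  by rewrite cj0 mul0r mulr0 addr0.
exists (Tmap (lie (Xof wv) p)); first exact: Vsp_intro (Xof_skew wv) hZ.
rewrite -[RHS](projblock_ext (i:=i)) -/t; apply: projblock_eq => j hj.
have hz : forall k, mu k = mu j -> zr k = 0.
  by move=> k hk''; apply: (z_nonM hM); rewrite hk'' hj.
rewrite mxE (Tmap_nonM hz hZ) Xofj0 /wv hj eqxx -/v divfK //.
Qed.

Lemma V_M i : (i < mblocks mu)%N -> isMshape lam mu (blockval mu i) ->
  forall w, Vblock lam mu i w -> Ublock lam mu i w.
Proof.
move=> hi hM w [t hV <-].
set v := blockval mu i.
have hm : (0 < mval mu v)%N := M_mval hM.
have hs : (sblk v < n)%N by have := blk_bound v; lia.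
set f := Ordinal hs.
have hmf : mu f = v := @first_blk v f hm (erefl _).
have hff : firstb f by rewrite first_iff hmf.
set r := rval lam mu v.
have hr : 0 < r by rewrite /r /rval hM sqrtr_gt0 rsq_pos.
have hr' : toC r != 0 by rewrite toC_eq0 lt0r_neq0.
have zf : zr f = r by rewrite /zr hff hmf.
have hzk : forall k, zr k != 0 -> mu k = v -> k = f.
  move=> k; rewrite /zr; case: ifP => [hk _ hkv|_]; last by rewrite eqxx.
  by apply: val_inj; move: hk; rewrite first_iff hkv => /eqP ->.
have [X [hX hZ hv]] := Vsp_elim hV.
have hX0k : forall k, X ord0 (lift ord0 k) = - conjc (X (lift ord0 k) ord0).
  by move=> k; have := skewE hX (lift ord0 k) ord0; move/(congr1 conjc); rewrite cjK cjN.
have hX00 : imag (X ord0 ord0) := skewE hX ord0 ord0.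
have hXkk : forall k, imag (X (lift ord0 k) (lift ord0 k)) := fun k => skewE hX _ _.
have hwk : forall k, zr k != 0 -> imag (X (lift ord0 k) ord0).
  move=> k hk; have := hZ k k; rewrite LXp_jk hX0k zvecE conj_toC => e.
  have e2 : toC (zr k) * (X (lift ord0 k) ord0 + conjc (X (lift ord0 k) ord0)) = 0.
    by rewrite -e; ring.
  move/eqP: e2; rewrite mulf_eq0 toC_eq0 (negbTE hk) /= addr_eq0 => /eqP e3.
  by rewrite /imag {2}e3 opprK.
have hzf : zr f != 0 by rewrite zf lt0r_neq0.
have htf : imag (t f ord0).
  rewrite hv LXp_j0.
  apply: imagB; [apply: imagD|apply: imagD].
  - exact: imagMr (hwk f hzf).
  - apply: imag_sum => k _; rewrite zvecE.
    case: (eqVneq (zr k) 0) => [->|hk]; first by rewrite toC0 mulr0; exact: imag0.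
    case: (eqVneq k f) => [->|hkf]; first by apply: imagMr; exact: hXkk.
    have hne : toC (mu k) - toC (mu f) != 0.
      rewrite -toCB toC_eq0 subr_eq0; apply/eqP => e.
      have hkv : mu k = v by rewrite e hmf.
      by move: hkf; rewrite (hzk k hk hkv) eqxx.
    have e := hZ f k; rewrite LXp_jk hX0k !zvecE conj_toC in e.
    set B := X (lift ord0 f) (lift ord0 k) in e *.
    have eB1 : B * (toC (mu k) - toC (mu f)) =
        - (X (lift ord0 f) ord0 * toC (zr k) + toC (zr f) * conjc (X (lift ord0 k) ord0)).
      by apply/eqP; rewrite -subr_eq0; apply/eqP; rewrite -e; ring.
    have -> : B = - (X (lift ord0 f) ord0 * toC (zr k) + toC (zr f) * conjc (X (lift ord0 k) ord0))
        * toC ((mu k - mu f)^-1) by rewrite toCV toCB -eB1 mulfK.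
    apply: imagMr; apply: imagMr; apply: imagN; apply: imagD.
      exact: imagMr (hwk f hzf).
    exact: imagMl (imag_conj (hwk k hk)).
  - by rewrite zvecE; apply: imagMl.
  - exact: imagMl (hwk f hzf).
set Y : 'M[R[i]]_n := \matrix_(j, k)
  (if (mu j == v) && (k == f) then t j ord0 / toC r
   else if (mu k == v) && (j == f) then - conjc (t k ord0) / toC r else 0).
have hYs : skewH Y.
  apply/matrixP => j k; rewrite adjE [X in _ = X]mxE !mxE.
  case: (eqVneq j f) => [->|hjf]; case: (eqVneq k f) => [->|hkf];
    rewrite ?eqxx ?hmf ?eqxx ?(negbTE hjf) ?(negbTE hkf) /= ?andbT ?andbF /=.
  - by rewrite conj_divr htf mulNr.
  - by case: (mu k == v); rewrite ?cj0 ?oppr0 // conj_divr mulNr opprK.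
  - case: (mu j == v); rewrite ?cj0 ?oppr0 //.
    by rewrite -mulNr conj_divr cjN cjK.
  - by rewrite cj0 oppr0.
have hYd : forall j k, mu j != mu k -> Y j k = 0.
  move=> j k hne; rewrite mxE.
  case: ifP => [/andP [/eqP hj /eqP hk]|_].
    by move: hne; rewrite hk hmf hj eqxx.
  case: ifP => // /andP [/eqP hk /eqP hj].
  by move: hne; rewrite hj hmf hk eqxx.
exists (Tmap (lie (diag0 Y) p)); first exact: Usp_intro hYs hYd.
apply: projblock_eq => j hj.
rewrite mxE LXp_diag_j0 (bigD1 f) //= big1 ?addr0.
  by rewrite mxE hj -/v eqxx /= eqxx zvecE zf divfK.
move=> k hkf; rewrite mxE (negbTE hkf) andbF /=.
case: ifP => [/andP [/eqP hk _]|_]; last by rewrite mul0r.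
case: (eqVneq (zr k) 0) => [hz|hz]; first by rewrite zvecE hz toC0 mulr0.
by have := hzk k hz hk; move/eqP: hkf.
Qed.

Lemma Ublock0 i : Ublock lam mu i 0.
Proof. by exists 0; [exact: Usp0 | exact: projblock0]. Qed.

End Comb.

Unset Implicit Arguments.

Theorem proposition4p6 (R : rcfType) (n : nat)
  (lam : 'I_n.+1 -> R) (mu : 'I_n -> R) :
  (0 < n)%N ->
  (forall j : 'I_n,
     mu j <= lam (widen_ord (leqnSn n) j) /\ lam (lift ord0 j) <= mu j) ->
  forall i : 'I_(mblocks mu),
    if isPshape lam mu (blockval mu i)
    then quot_iso_std (Vblock lam mu i) (Ublock lam mu i) (Lgrp lam mu i)
    else quot_trivial (Vblock lam mu i) (Ublock lam mu i).
Proof.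
move=> _ Hint i.
have hi : (i < mblocks mu)%N := ltn_ord i.
have hm := blockval_pos hi.
have [_ _ hWs _] := shape_facts Hint (blockval mu i).
have hvS : blockval mu i \in Sv lam mu := Sv_mu lam hm.
case hP: (isPshape lam mu (blockval mu i)).
  have hM : ~~ isMshape lam mu (blockval mu i).
    by rewrite /isMshape -(eqP hP); apply/eqP; lia.
  have hW : ~~ isWshape lam mu (blockval mu i).
    by rewrite /isWshape (eqP hP); apply/eqP; lia.
  have hvM : blockval mu i \notin Ml lam mu by rewrite mem_filter (negbTE hM).
  have hk : kap lam mu (blockval mu i) != 0 by rewrite (kap_zero Hint hvM hvS) (negbTE hW).
  exists id; split.
  - by [].
  - by move=> y; exists y => //; exact: (V_P Hint hi hM hk).
  - move=> w hw; split => [->|hU]; first exact: Ublock0.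
    exact: (U_nonM Hint hM hU).
  - by [].
case hMv: (isMshape lam mu (blockval mu i)).
  by move=> w hw; exact: (V_M Hint hi hMv hw).
have hWv := hWs (negbT hP) (negbT hMv).
have hvM : blockval mu i \notin Ml lam mu by rewrite mem_filter hMv.
have hk : kap lam mu (blockval mu i) = 0 by apply/eqP; rewrite (kap_zero Hint hvM hvS).
move=> w hw; rewrite (V_W Hint (negbT hMv) hk hw); exact: Ublock0.
Qed.
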